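(* Let $q$ be a power of a prime $p$, $M,N$ positive integers coprime to $p$, $\lambda_1,\lambda_2\in\mathbb{F}_q^{\ast}$, and let $\mathbb{F}_{q^m}$ be an extension field containing $\gamma,\beta$ with $\gamma^M=\lambda_1$, $\beta^N=\lambda_2$, a primitive $M$-th root of unity $\zeta_1$ and a primitive $N$-th root of unity $\zeta_2$. Let $\Omega=\{(i,j):0\le i\le M-1,\ 0\le j\le N-1\}$. Let $\mathcal{C}$ be a 2-D $(\lambda_1,\lambda_2)$-constacyclic code of area $M\times N$ over $\mathbb{F}_q$ with minimum distance $d$ and common zero set $V_c$. Let $\widetilde{\mathbb{E}}=\{(\theta,\phi)\in\Omega:(\gamma\zeta_1^{\theta},\beta\zeta_2^{\phi})\in V_c\}$ and write $\Omega\setminus\widetilde{\mathbb{E}}=\{(\theta_1,\phi_1),\dots,(\theta_{s'},\phi_{s'})\}$, $s'=MN-|V_c|$. Let $c\in\mathcal{C}$, and let $e$ be an $M\times N$ array over $\mathbb{F}_q$ whose set of nonzero positions $\mathbb{E}$ satisfies $1\le t:=|\mathbb{E}|\le\lfloor(d-1)/2\rfloor$; write $\Omega\setminus\mathbb{E}=\{(i_1,j_1),\dots,(i_{t'},j_{t'})\}$. Let $r=c+e$, let $R=(R_{\theta,\phi})$ with $R_{\theta,\phi}=\sum_{i,j}r_{i,j}(\gamma\zeta_1^{\theta})^i(\beta\zeta_2^{\phi})^j$, and $R(x,y)=\sum_{(\theta,\phi)\in\Omega}R_{\theta,\phi}x^{\theta}y^{\phi}$. Then the linear system $AX=B$ in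 the unknowns $X=(X_1,\dots,X_{s'})^T$, where $A$ is the $t'\times s'$ matrix with entries $A_{l,k}=\zeta_1^{-i_l\theta_k}\zeta_2^{-j_l\phi_k}$ and $B=(R(\zeta_1^{-i_1},\zeta_2^{-j_1}),\dots,R(\zeta_1^{-i_{t'}},\zeta_2^{-j_{t'}}))^T$, has a unique solution (namely $X_k=C_{\theta_k,\phi_k}$, the entries of the spectrum of $c$ outside the spectral nulls).
   Context: An $M\times N$ array $c=(c_{i,j})$ over $\mathbb{F}_q$ is identified with $c(x,y)=\sum_{i,j}c_{i,j}x^iy^j$; its spectrum is $C_{\theta,\phi}=\sum_{i,j}c_{i,j}(\gamma\zeta_1^{\theta})^i(\beta\zeta_2^{\phi})^j$. A 2-D $(\lambda_1,\lambda_2)$-constacyclic code of area $M\times N$ over $\mathbb{F}_q$ is an $\mathbb{F}_q$-linear subspace of $M\times N$ arrays closed under the column $\lambda_1$-constacyclic shift (row $0$ becomes $\lambda_1$ times row $M-1$, row $i$ becomes row $i-1$) and the row $\lambda_2$-constacyclic shift (column $0$ becomes $\lambda_2$ times column $N-1$, column $j$ becomes column $j-1$); equivalently an ideal of $\mathbb{F}_q[x,y]/\langle x^M-\lambda_1,y^N-\lambda_2\rangle$. Let $V_\circ=\{(a,b): a^M=\lambda_1,\ b^N=\lambda_2\}$ and $V_1$ the set of common roots of all $c(x,y)$, $c\in\mathcal{C}$; the common zero set is $V_c=V_\circ\cap V_1$. The minimum distance is the least Hamming weight of a nonzero codeword. *)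

(* Defs.v *)
From HB Require Import structures.
From mathcomp Require Import all_boot all_order all_algebra all_field.
Set Implicit Arguments. Unset Strict Implicit. Unset Printing Implicit Defensive.
Import GRing.Theory.
Local Open Scope ring_scope.

Section Defs.
Variables (F : finFieldType) (M N : nat).

(* column lambda-constacyclic shift: row 0 <- l * row (M-1), row i <- row (i-1) *)
Definition col_cshift (l : F) (c : 'M[F]_(M, N)) : 'M[F]_(M, N) :=
  \matrix_(i, j) ((if (i : nat) == 0%N then l else 1) * c (ord_pred i) j).

(* row lambda-constacyclic shift: col 0 <- l * col (N-1), col j <- col (j-1) *)
Definition row_cshift (l : F) (c : 'M[F]_(M, N)) : 'M[F]_(M, N) :=
  \matrix_(i, j) ((if (j : nat) == 0%N then l else 1) * c i (ord_pred j)).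

Definition is_2D_constacyclic (l1 l2 : F) (C : {set 'M[F]_(M, N)}) : Prop :=
  [/\ 0 \in C,
      (forall (a : F) x y, x \in C -> y \in C -> a *: x + y \in C),
      (forall c, c \in C -> col_cshift l1 c \in C) &
      (forall c, c \in C -> row_cshift l2 c \in C)].

Definition supp (c : 'M[F]_(M, N)) : {set 'I_M * 'I_N} :=
  [set ij : 'I_M * 'I_N | c ij.1 ij.2 != 0].

Definition wt (c : 'M[F]_(M, N)) : nat := #|supp c|.

Definition is_min_dist (C : {set 'M[F]_(M, N)}) (d : nat) : Prop :=
  (exists2 c, c \in C & (c != 0) && (wt c == d)) /\
  (forall c, c \in C -> c != 0 -> (d <= wt c)%N).

Variable L : fieldExtType F.

Definition eval2 (c : 'M[F]_(M, N)) (a b : L) : L :=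
  \sum_(i < M) \sum_(j < N) (c i j)%:A * a ^+ i * b ^+ j.

Definition Vc (l1 l2 : F) (C : {set 'M[F]_(M, N)}) (ab : L * L) : bool :=
  [&& ab.1 ^+ M == l1%:A, ab.2 ^+ N == l2%:A &
      [forall c in C, eval2 c ab.1 ab.2 == 0]].

Definition Etilde (l1 l2 : F) (C : {set 'M[F]_(M, N)}) (gam bet z1 z2 : L)
  : {set 'I_M * 'I_N} :=
  [set tp : 'I_M * 'I_N | Vc l1 l2 C (gam * z1 ^+ tp.1, bet * z2 ^+ tp.2)].

End Defs.

(* Main.v *)
Require Import Defs.
From HB Require Import structures.
From mathcomp Require Import all_boot all_order all_algebra all_field.
From mathcomp Require Import ring.
Import GRing.Theory.
Local Open Scope ring_scope.

Lemma orth {L : fieldType} {z : L} {n} (pz : n.-primitive_root z) (a b : 'I_n) :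
  \sum_(k < n) (z ^+ a * (z ^+ b)^-1) ^+ k = (a == b)%:R * n%:R.
Proof.
have n0 := prim_order_gt0 pz.
have z0 : z != 0 by rewrite (prim_root_eq0 pz) -lt0n.
have zb0 : z ^+ b != 0 by rewrite expf_neq0.
case: eqP => [->|ab].
  rewrite mulfV // mul1r; under eq_bigr do rewrite expr1n.
  by rewrite sumr_const card_ord.
rewrite mul0r; set q := _ * _.
have q1 : q != 1.
  apply/eqP => h; have : z ^+ a = z ^+ b.
    by rewrite -[z ^+ a]mulr1 -(mulVf zb0) mulrA -/q h mul1r.
  move/eqP; rewrite (eq_prim_root_expr pz) !modn_small // => /eqP abv.
  by apply: ab; apply: val_inj.
have qn : q ^+ n = 1.
  rewrite /q exprMn exprVn -!exprM mulnC exprM (prim_expr_order pz) expr1n.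
  by rewrite mulnC exprM (prim_expr_order pz) expr1n invr1 mulr1.
have := subrX1 q n; rewrite qn subrr => /esym /eqP; rewrite mulf_eq0 subr_eq0 (negPf q1) /=.
by move/eqP.
Qed.
Definition evL {L : fieldType} {M N : nat} (w : 'M[L]_(M,N)) (a b : L) : L :=
  \sum_(i < M) \sum_(j < N) w i j * a ^+ i * b ^+ j.

Lemma sum4_swap (L : fieldType) (M N M' N' : nat) (T : 'I_M -> 'I_N -> 'I_M' -> 'I_N' -> L) :
  \sum_(th < M) \sum_(ph < N) \sum_(i < M') \sum_(j < N') T th ph i j =
  \sum_(i < M') \sum_(j < N') \sum_(th < M) \sum_(ph < N) T th ph i j.
Proof.
transitivity (\sum_(th < M) \sum_(i < M') \sum_(j < N') \sum_(ph < N) T th ph i j).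
  apply: eq_bigr => th _; rewrite exchange_big /=.
  by apply: eq_bigr => i _; rewrite exchange_big.
rewrite exchange_big /=; apply: eq_bigr => i _.
by rewrite exchange_big.
Qed.

Lemma dft_inv (L : fieldType) (M N : nat) (g b z1 z2 : L) (w : 'M[L]_(M,N))
  (i : 'I_M) (j : 'I_N) :
  M.-primitive_root z1 -> N.-primitive_root z2 ->
  \sum_(th < M) \sum_(ph < N) evL w (g * z1 ^+ th) (b * z2 ^+ ph) * (z1 ^- i) ^+ th * (z2 ^- j) ^+ ph
  = (M * N)%:R * (g ^+ i * b ^+ j * w i j).
Proof.
move=> p1 p2.
transitivity (\sum_(i' < M) \sum_(j' < N) w i' j' * g^+i' * b^+j' *
   ((\sum_(th < M) (z1^+i' * (z1^+i)^-1)^+th) * (\sum_(ph<N) (z2^+j' * (z2^+j)^-1)^+ph))).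
  transitivity (\sum_(th < M) \sum_(ph < N) \sum_(i' < M) \sum_(j' < N)
     w i' j' * (g * z1 ^+ th) ^+ i' * (b * z2 ^+ ph) ^+ j' * (z1 ^- i) ^+ th * (z2 ^- j) ^+ ph).
    apply: eq_bigr => th _; apply: eq_bigr => ph _.
    rewrite /evL mulr_suml mulr_suml; apply: eq_bigr => i' _.
    by rewrite mulr_suml mulr_suml.
  rewrite sum4_swap; apply: eq_bigr => i' _; apply: eq_bigr => j' _.
  rewrite mulr_suml mulr_sumr; apply: eq_bigr => th _; rewrite mulr_sumr mulr_sumr.
  apply: eq_bigr => ph _.
  rewrite !exprMn -!exprVn -!exprM [(th * i')%N]mulnC [(ph * j')%N]mulnC !exprM.
  ring.
rewrite (bigD1 i) //= [X in _ + X]big1 => [|i' /negPf ne]; last first.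
  by apply: big1 => j' _; rewrite (orth p1) ne !mul0r mulr0.
rewrite addr0 (bigD1 j) //= [X in _ + X]big1 => [|j' /negPf ne]; last first.
  by rewrite (orth p2) ne !mul0r !mulr0.
rewrite addr0 (orth p1) (orth p2) !eqxx natrM. rewrite /= !mul1r; ring.
Qed.
Definition Gmx {F : finFieldType} {M N : nat} (C : {set 'M[F]_(M,N)}) : 'M[F]_(#|C|, M*N) :=
  \matrix_(k < #|C|) mxvec (enum_val k).

Definition inspan {F : finFieldType} {L : fieldExtType F} {M N : nat} (C : {set 'M[F]_(M,N)})
  (w : 'M[L]_(M,N)) := (mxvec w <= map_mx (in_alg L) (Gmx C))%MS.

Lemma inspan_C {F : finFieldType} {L : fieldExtType F} {M N : nat} (C : {set 'M[F]_(M,N)}) c :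
  c \in C -> inspan (L:=L) C (map_mx (in_alg L) c).
Proof.
move=> cC; rewrite /inspan -map_mxvec.
have -> : mxvec c = row (enum_rank_in cC c) (Gmx C) by rewrite rowK enum_rankK_in.
by rewrite map_row row_sub.
Qed.

Lemma sumC {F : finFieldType} {M N : nat} (C : {set 'M[F]_(M,N)}) (I : finType) (a : I -> F) (f : I -> 'M[F]_(M,N)) :
  0 \in C -> (forall (a : F) x y, x \in C -> y \in C -> a *: x + y \in C) ->
  (forall i, f i \in C) -> \sum_i a i *: f i \in C.
Proof.
move=> C0 Cl fC; apply: (big_ind (fun x => x \in C)) => //.
  by move=> x y xC yC; rewrite -[x]scale1r Cl.
by move=> i _; rewrite -[_ *: _]addr0 Cl.
Qed.

Lemma min_dist_span {F : finFieldType} {L : fieldExtType F} {M N : nat} (C : {set 'M[F]_(M,N)})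
   (d : nat) (S : {set 'I_M * 'I_N}) (w : 'M[L]_(M,N)) :
  0 \in C -> (forall (a : F) x y, x \in C -> y \in C -> a *: x + y \in C) ->
  (forall c, c \in C -> c != 0 -> (d <= wt c)%N) ->
  inspan C w -> (forall i j, (i, j) \notin S -> w i j = 0) -> (#|S| < d)%N -> w = 0.
Proof.
move=> C0 Cl md /submxP [a wa] wS Sd.
pose dv : 'rV[F]_(M*N) := mxvec (\matrix_(i,j) (if (i,j) \in S then 0 else 1) : 'M[F]_(M,N)).
pose Dg := diag_mx dv.
set G := Gmx C.
have Fside : forall bb : 'rV[F]_#|C|, bb *m G *m Dg = 0 -> bb *m G = 0.
  move=> bb.
  have -> : bb *m G = mxvec (\sum_k bb 0 k *: enum_val k).
    rewrite mulmx_sum_row linear_sum; apply: eq_bigr => k _.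
    by rewrite linearZ /= rowK.
  set c' := \sum_k _ => h.
  have c'C : c' \in C by apply: sumC => // k; apply: enum_valP.
  have c'S : supp c' \subset S.
    apply/subsetP => [[i j]]; rewrite inE /=; apply: contraR => ijS.
    have := congr1 (fun m : 'M[F]_(1, M*N) => m 0 (mxvec_index i j)) h.
    rewrite /Dg mul_mx_diag mxE /dv !mxvecE mxE (negPf ijS) mulr1 => ->.
    by rewrite mxE.
  have : c' = 0.
    apply/eqP; apply: contraTT Sd => c'0; rewrite -leqNgt.
    exact: leq_trans (md _ c'C c'0) (subset_leq_card c'S).
  by move=> ->; rewrite linear0.
have KG : (kermx (G *m Dg) <= kermx G)%MS.
  apply/sub_kermxP/row_matrixP => i; rewrite row0 row_mul; apply: Fside.
  by rewrite -mulmxA -row_mul mulmx_ker row0.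
have aK : (a <= kermx (map_mx (in_alg L) (G *m Dg)))%MS.
  apply/sub_kermxP; rewrite map_mxM mulmxA -wa /Dg map_diag_mx mul_mx_diag.
  apply/rowP => k; case: (mxvec_indexP k) => i j.
  rewrite !mxE mxvecE /dv mxvecE mxE.
  case: ifP => ijS; first by rewrite rmorph0 mulr0.
  by rewrite wS ?ijS // mul0r.
have aG : (a <= kermx (map_mx (in_alg L) G))%MS.
  by apply: submx_trans aK _; rewrite -!map_kermx map_submx.
move/sub_kermxP: aG; rewrite -wa => /eqP; rewrite mxvec_eq0 => /eqP.
done.
Qed.
Lemma eval2_col {F : finFieldType} {L : fieldExtType F} {M N : nat} (l : F)
  (c : 'M[F]_(M,N)) (a b : L) :
  a ^+ M = l%:A -> eval2 (col_cshift l c) a b = a * eval2 c a b.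
Proof.
move=> aM; rewrite /eval2 mulr_sumr (reindex_inj (@ordS_inj M)) /=.
apply: eq_bigr => i _; rewrite mulr_sumr; apply: eq_bigr => j _.
rewrite mxE ordSK.
case: (ltnP i.+1 M) => h.
  by rewrite /= (modn_small h) /= mul1r exprS; ring.
have e : i.+1 = M by apply/eqP; rewrite eqn_leq h ltn_ord.
rewrite /= e modnn /= expr0.
have -> : (l * c i j)%:A = l%:A * (c i j)%:A :> L by rewrite mulr_algl scalerA.
have aM' : a ^+ i.+1 = l%:A by rewrite e.
by rewrite -aM' exprS; ring.
Qed.

Lemma eval2_row {F : finFieldType} {L : fieldExtType F} {M N : nat} (l : F)
  (c : 'M[F]_(M,N)) (a b : L) :
  b ^+ N = l%:A -> eval2 (row_cshift l c) a b = b * eval2 c a b.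
Proof.
move=> bN; rewrite /eval2 mulr_sumr; apply: eq_bigr => i _.
rewrite mulr_sumr (reindex_inj (@ordS_inj N)) /=; apply: eq_bigr => j _.
rewrite mxE ordSK.
case: (ltnP j.+1 N) => h.
  by rewrite /= (modn_small h) /= mul1r exprS; ring.
have e : j.+1 = N by apply/eqP; rewrite eqn_leq h ltn_ord.
rewrite /= e modnn /= expr0.
have -> : (l * c i j)%:A = l%:A * (c i j)%:A :> L by rewrite mulr_algl scalerA.
have bN' : b ^+ j.+1 = l%:A by rewrite e.
by rewrite -bN' exprS; ring.
Qed.

Definition shc {F : finFieldType} {M N : nat} (l1 l2 : F) (a b : nat) (c : 'M[F]_(M,N)) :=
  iter a (col_cshift l1) (iter b (row_cshift l2) c).

Lemma eval2_shc {F : finFieldType} {L : fieldExtType F} {M N : nat} (l1 l2 : F)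
  (c : 'M[F]_(M,N)) (x y : L) a b :
  x ^+ M = l1%:A -> y ^+ N = l2%:A ->
  eval2 (shc l1 l2 a b c) x y = x ^+ a * y ^+ b * eval2 c x y.
Proof.
move=> xM yN; rewrite /shc; elim: a => [|a IH] /=.
  elim: b => [|b IH] /=; first by rewrite !expr0 !mul1r.
  by rewrite eval2_row // IH exprS expr0 !mul1r mulrA.
by rewrite eval2_col // IH exprS !mulrA.
Qed.

Lemma shc_in {F : finFieldType} {M N : nat} (l1 l2 : F) (C : {set 'M[F]_(M,N)}) c a b :
  (forall c, c \in C -> col_cshift l1 c \in C) ->
  (forall c, c \in C -> row_cshift l2 c \in C) -> c \in C -> shc l1 l2 a b c \in C.
Proof.
move=> Hc Hr cC; rewrite /shc; elim: a => [|a IH] /=; last exact: Hc.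
by elim: b => [|b IH] //=; apply: Hr.
Qed.

Lemma evL_map {F : finFieldType} {L : fieldExtType F} {M N : nat} (c : 'M[F]_(M,N)) (x y : L) :
  evL (map_mx (in_alg L) c) x y = eval2 c x y.
Proof. by rewrite /evL /eval2; apply: eq_bigr => i _; apply: eq_bigr => j _; rewrite mxE. Qed.

Lemma evL_sum {L : fieldType} {M N : nat} (I : finType) (f : I -> 'M[L]_(M,N)) x y :
  evL (\sum_k f k) x y = \sum_k evL (f k) x y.
Proof.
Proof.
rewrite /evL; symmetry; rewrite exchange_big /=; apply: eq_bigr => i _.
rewrite exchange_big /=; apply: eq_bigr => j _.
by rewrite summxE !mulr_suml.
Qed.

Lemma evL_scale {L : fieldType} {M N : nat} (a : L) (w : 'M[L]_(M,N)) x y :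
  evL (a *: w) x y = a * evL w x y.
Proof.
rewrite /evL mulr_sumr; apply: eq_bigr => i _; rewrite mulr_sumr; apply: eq_bigr => j _.
by rewrite mxE !mulrA.
Qed.

Lemma evL_sub {L : fieldType} {M N : nat} (w1 w2 : 'M[L]_(M,N)) x y :
  evL (w1 - w2) x y = evL w1 x y - evL w2 x y.
Proof.
rewrite /evL -sumrB; apply: eq_bigr => i _; rewrite -sumrB; apply: eq_bigr => j _.
by rewrite !mxE !mulrBl.
Qed.

Lemma evL0 {L : fieldType} {M N : nat} x y : evL (0 : 'M[L]_(M,N)) x y = 0.
Proof. by rewrite /evL big1 // => i _; rewrite big1 // => j _; rewrite mxE !mul0r. Qed.

Lemma dft_inj (L : fieldType) (M N : nat) (g b z1 z2 : L) (w : 'M[L]_(M,N)) :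
  M.-primitive_root z1 -> N.-primitive_root z2 -> g != 0 -> b != 0 ->
  (forall (th : 'I_M) (ph : 'I_N), evL w (g * z1 ^+ th) (b * z2 ^+ ph) = 0) -> w = 0.
Proof.
move=> p1 p2 g0 b0 H; apply/matrixP => i j; rewrite mxE.
have := dft_inv _ _ _ g b z1 z2 w i j p1 p2.
rewrite big1 => [|th _]; last by rewrite big1 // => ph _; rewrite H !mul0r.
move/esym/eqP; rewrite natrM !mulf_eq0 !expf_eq0 (negPf g0) (negPf b0) !andbF /=.
by rewrite (negPf (prim_root_natf_neq0 p1)) (negPf (prim_root_natf_neq0 p2)) /= => /eqP.
Qed.

Definition delta {L : fieldType} (M N : nat) (g b z1 z2 : L) (t0 p0 : nat) : 'M[L]_(M,N) :=
  \matrix_(i, j) ((g ^+ i)^-1 * (b ^+ j)^-1 * z1 ^- (i * t0) * z2 ^- (j * p0)).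

Lemma delta_ev (L : fieldType) (M N : nat) (g b z1 z2 : L) (t0 : 'I_M) (p0 : 'I_N) (th : 'I_M) (ph : 'I_N) :
  M.-primitive_root z1 -> N.-primitive_root z2 -> g != 0 -> b != 0 ->
  evL (delta M N g b z1 z2 t0 p0) (g * z1 ^+ th) (b * z2 ^+ ph) =
  ((th == t0)%:R * M%:R) * ((ph == p0)%:R * N%:R).
Proof.
move=> p1 p2 g0 b0; rewrite -(orth p1) -(orth p2) mulr_suml /evL.
apply: eq_bigr => i _; rewrite mulr_sumr; apply: eq_bigr => j _; rewrite mxE.
rewrite !exprMn -!exprM [(th * i)%N]mulnC [(ph * j)%N]mulnC !exprM -!exprVn.
rewrite [z1^-1 ^+ i ^+ t0]exprAC [z2^-1 ^+ j ^+ p0]exprAC !exprVn.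
have gi : g ^+ i != 0 by rewrite expf_neq0.
have bj : b ^+ j != 0 by rewrite expf_neq0.
move: gi bj; set G := g ^+ i; set B := b ^+ j; set X1 := _ ^+ t0 ^+ i; set X2 := _ ^+ p0 ^+ j.
set Y1 := z1 ^+ i ^+ th; set Y2 := z2 ^+ j ^+ ph => gi bj.
field.
have z10 : z1 != 0 by rewrite (prim_root_eq0 p1) -lt0n (prim_order_gt0 p1).
have z20 : z2 != 0 by rewrite (prim_root_eq0 p2) -lt0n (prim_order_gt0 p2).
by rewrite gi bj /X1 /X2 !expf_neq0 // ?invr_eq0 ?expf_neq0.
Qed.
Theorem mainTheorem10 (F : finFieldType) (L : fieldExtType F) (p M N : nat)
  (l1 l2 : F) (gam bet z1 z2 : L) (C : {set 'M[F]_(M, N)}) (d : nat)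
  (c e : 'M[F]_(M, N)) (s t' : nat)
  (en : 'I_s -> 'I_M * 'I_N) (ep : 'I_t' -> 'I_M * 'I_N) :
  prime p -> p \in [pchar F] ->
  (0 < M)%N -> (0 < N)%N -> coprime M p -> coprime N p ->
  l1 != 0 -> l2 != 0 ->
  gam ^+ M = l1%:A -> bet ^+ N = l2%:A ->
  M.-primitive_root z1 -> N.-primitive_root z2 ->
  is_2D_constacyclic l1 l2 C -> is_min_dist C d ->
  c \in C ->
  (1 <= wt e <= (d.-1)./2)%N ->
  (* (theta_k, phi_k) = en k enumerates Omega \ E~ *)
  injective en ->
  (forall tp, tp \notin @Etilde F M N L l1 l2 C gam bet z1 z2 <-> exists k, en k = tp) ->
  (* (i_l, j_l) = ep l enumerates Omega \ E *)
  injective ep ->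
  (forall ij, ij \notin supp e <-> exists l, ep l = ij) ->
  let r := c + e in
  let Rs (th : 'I_M) (ph : 'I_N) := eval2 r (gam * z1 ^+ th) (bet * z2 ^+ ph) in
  let A := \matrix_(l < t', k < s)
             (z1 ^- ((ep l).1 * (en k).1) * z2 ^- ((ep l).2 * (en k).2)) in
  let B := \col_(l < t') \sum_(th < M) \sum_(ph < N)
             Rs th ph * (z1 ^- (ep l).1) ^+ th * (z2 ^- (ep l).2) ^+ ph in
  let Xc := \col_(k < s) eval2 c (gam * z1 ^+ (en k).1) (bet * z2 ^+ (en k).2) in
  A *m Xc = B /\ (forall X : 'cV[L]_s, A *m X = B -> X = Xc).
Proof.
move=> pp pc M0 N0 cM cN l10 l20 gM bN p1 p2 [C0 Cl Ccol Crow] [_ md] cC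
  /andP[t1 t2] en_inj en_im ep_inj ep_im r Rs A B Xc.
have z10 : z1 != 0 by rewrite (prim_root_eq0 p1) -lt0n (prim_order_gt0 p1).
have z20 : z2 != 0 by rewrite (prim_root_eq0 p2) -lt0n (prim_order_gt0 p2).
have g0 : gam != 0.
  apply/eqP => g0'; move: gM; rewrite g0' expr0n (gtn_eqF M0) /= => /esym/eqP.
  by rewrite scaler_eq0 oner_eq0 orbF (negPf l10).
have b0 : bet != 0.
  apply/eqP => b0'; move: bN; rewrite b0' expr0n (gtn_eqF N0) /= => /esym/eqP.
  by rewrite scaler_eq0 oner_eq0 orbF (negPf l20).
have pM : forall th : nat, (gam * z1 ^+ th) ^+ M = l1%:A.
  by move=> th; rewrite exprMn exprAC (prim_expr_order p1) expr1n mulr1.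
have pN : forall ph : nat, (bet * z2 ^+ ph) ^+ N = l2%:A.
  by move=> ph; rewrite exprMn exprAC (prim_expr_order p2) expr1n mulr1.
have wtd : (wt e < d)%N.
  move: t1 t2; case: (d) => [|d'] /= t1 t2; first by have := leq_trans t1 t2.
  rewrite ltnS; apply: leq_trans t2 _.
  by rewrite leq_half_double -addnn; apply: leqW; apply: leq_addr.
set Et := @Etilde F M N L l1 l2 C gam bet z1 z2.
have EtV : forall tp, tp \in Et -> eval2 c (gam * z1 ^+ tp.1) (bet * z2 ^+ tp.2) = 0.
  move=> tp; rewrite inE /Vc /= => /and3P [_ _ /forall_inP H]; apply/eqP; exact: H.
have EnC : forall k, exists2 c0, c0 \in C &
    eval2 c0 (gam * z1 ^+ (en k).1) (bet * z2 ^+ (en k).2) != 0.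
  move=> k; have : en k \notin Et by apply/en_im; exists k.
  rewrite inE /Vc /= pM pN !eqxx /= negb_forall_in => /exists_inP [c0 c0C h].
  by exists c0.
have sumEn : forall f : 'I_M -> 'I_N -> L, (forall tp, tp \in Et -> f tp.1 tp.2 = 0) ->
    \sum_(th < M) \sum_(ph < N) f th ph = \sum_k f (en k).1 (en k).2.
  move=> f H; rewrite pair_big /= (bigID (fun tp => tp \in Et)) /= big1 ?add0r.
    rewrite (eq_bigl (fun tp => tp \in en @: [set: 'I_s])).
      by rewrite big_imset /=; [apply: eq_bigl => k; rewrite in_setT | move=> x y _ _; apply: en_inj].
    move=> tp /=; apply/idP/imsetP.
      by move/en_im => [k <-]; exists k; rewrite ?in_setT.
    by move=> [k _ ->]; apply/en_im; exists k.
  by move=> tp /H.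
have AXc : A *m Xc = B.
  apply/colP => l; rewrite !mxE.
  case E: (ep l) => [i j].
  have : ep l \notin supp e by apply/ep_im; exists l.
  rewrite E inE /= negbK => /eqP e0.
  have -> : \sum_k A l k * Xc k 0 = \sum_(th < M) \sum_(ph < N)
      eval2 c (gam * z1 ^+ th) (bet * z2 ^+ ph) * (z1 ^- i) ^+ th * (z2 ^- j) ^+ ph.
    rewrite sumEn; last by move=> tp /EtV ->; rewrite !mul0r.
    apply: eq_bigr => k _; rewrite !mxE E /= !exprM -!exprVn; ring.
  rewrite /Rs; under eq_bigr => th _ do under eq_bigr => ph _ do rewrite -evL_map.
  under [LHS]eq_bigr => th _ do under eq_bigr => ph _ do rewrite -evL_map.
  rewrite !(dft_inv _ _ _ gam bet z1 z2 _ i j p1 p2).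
  by rewrite /r !mxE e0 addr0.
split => // X AX.
set D := X - Xc.
have AD : A *m D = 0 by rewrite mulmxBr AX AXc subrr.
suff D0 : D = 0 by apply/eqP; rewrite -subr_eq0 -/D D0.
pose g k := delta M N gam bet z1 z2 (en k).1 (en k).2.
pose u := \sum_k D k 0 *: g k.
have usupp : forall i j, (i, j) \notin supp e -> u i j = 0.
  move=> i j /ep_im [l El].
  have := congr1 (fun m : 'cV[L]_t' => m l 0) AD; rewrite !mxE => h.
  rewrite /u summxE.
  transitivity ((gam ^+ i)^-1 * (bet ^+ j)^-1 * \sum_k A l k * D k 0).
    rewrite mulr_sumr; apply: eq_bigr => k _; rewrite !mxE El /=; ring.
  by rewrite h mulr0.
have gspan : forall k, inspan C (g k).
  move=> k; have [c0 c0C nz] := EnC k.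
  set th0 := (en k).1; set ph0 := (en k).2.
  set x0 := gam * z1 ^+ th0; set y0 := bet * z2 ^+ ph0.
  pose h := \sum_(a < M) \sum_(b < N)
     ((x0 ^+ a)^-1 * (y0 ^+ b)^-1) *: map_mx (in_alg L) (shc l1 l2 a b c0).
  have hspan : inspan C h.
    rewrite /inspan linear_sum; apply: summx_sub => a _.
    rewrite linear_sum; apply: summx_sub => b _.
    rewrite linearZ; apply: scalemx_sub; apply: inspan_C; exact: shc_in.
  have hg : h = eval2 c0 x0 y0 *: g k.
    apply/eqP; rewrite -subr_eq0; apply/eqP.
    apply: (dft_inj _ _ _ gam bet z1 z2 _ p1 p2 g0 b0) => th ph.
    rewrite evL_sub evL_scale /g delta_ev // /h evL_sum.
    under eq_bigr => a _ do rewrite evL_sum.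
    under eq_bigr => a _ do under eq_bigr => b _ do rewrite evL_scale evL_map eval2_shc //.
    have Hs : forall E : L, \sum_(a < M) \sum_(b < N)
        (x0 ^+ a)^-1 * (y0 ^+ b)^-1 * ((gam * z1 ^+ th) ^+ a * (bet * z2 ^+ ph) ^+ b * E)
        = E * ((th == th0)%:R * M%:R * ((ph == ph0)%:R * N%:R)).
      move=> E; rewrite -(orth p1) -(orth p2) mulr_suml mulr_sumr.
      apply: eq_bigr => a _; rewrite mulr_sumr mulr_sumr; apply: eq_bigr => b _.
      rewrite /x0 /y0 !exprMn !invfM !exprVn.
      have ga : gam ^+ a != 0 by rewrite expf_neq0.
      have bb : bet ^+ b != 0 by rewrite expf_neq0.
      have za : z1 ^+ th0 ^+ a != 0 by rewrite !expf_neq0.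
      have zb : z2 ^+ ph0 ^+ b != 0 by rewrite !expf_neq0.
      move: ga bb za zb.
      set G := gam ^+ a; set Bb := bet ^+ b; set Z1 := z1 ^+ th0 ^+ a; set Z2 := z2 ^+ ph0 ^+ b.
      set W1 := z1 ^+ th ^+ a; set W2 := z2 ^+ ph ^+ b => ga bb za zb.
      field; by rewrite ga bb za zb.
    rewrite Hs; case: (eqVneq th th0) => [->|ne1]; last by rewrite !mul0r !mulr0 subrr.
    case: (eqVneq ph ph0) => [->|ne2]; last by rewrite !mul0r !mulr0 subrr.
    by rewrite subrr.
  have -> : g k = (eval2 c0 x0 y0)^-1 *: h by rewrite hg scalerA mulVf // scale1r.
  by rewrite /inspan linearZ; apply: scalemx_sub.
have uspan : inspan C u.
  rewrite /inspan linear_sum; apply: summx_sub => k _.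
  rewrite linearZ /=; apply: scalemx_sub; exact: gspan.
have u0 : u = 0 by apply: (min_dist_span C d (supp e) u C0 Cl md uspan usupp wtd).
apply/colP => k0.
have := congr1 (fun w => evL w (gam * z1 ^+ (en k0).1) (bet * z2 ^+ (en k0).2)) u0.
rewrite /= evL0 /u evL_sum.
under eq_bigr => k _ do rewrite evL_scale /g delta_ev //.
rewrite (bigD1 k0) //= big1 ?addr0 => [|k kk0]; last first.
  case: eqP => [e1|]; last by rewrite !mul0r mulr0.
  case: eqP => [e2|]; last by rewrite !mul0r !mulr0.
  have : en k0 = en k by move: e1 e2; case: (en k0) => ? ?; case: (en k) => ? ? /= -> ->.
  by move/en_inj => kk; rewrite kk eqxx in kk0.
rewrite !eqxx /= !mul1r => /eqP; rewrite !mulf_eq0 (negPf (prim_root_natf_neq0 p1)).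
rewrite (negPf (prim_root_natf_neq0 p2)) !orbF => /eqP ->; by rewrite mxE.
Qed.
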